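(* Let $n\ge 2$ be an integer and $A\subseteq L_n$. The subspace $(L_n,\tau(A)|_{L_n})$ of $(X_n,\tau(A))$ is perfect if and only if $A$ is a $G_\delta$-set in $(L_n,\tau_E|_{L_n})$.
   Context: For $\overline{x},\overline{a}\in\mathbb R^n$ let $|\overline{x}-\overline{a}|$ be the Euclidean distance and $B(\overline{a},\epsilon)=\{\overline{x}\in\mathbb R^n:|\overline{x}-\overline{a}|<\epsilon\}$. Let $P_n=\{\overline{x}\in\mathbb R^n: x_n>0\}$, $L_n=\{\overline{x}\in\mathbb R^n: x_n=0\}$, $X_n=P_n\cup L_n$, and let $\tau_E$ denote the Euclidean topology on $X_n$. For $\overline{a}\in L_n$ and $\epsilon>0$ put $\overline{a(\epsilon)}=(a_1,\dots,a_{n-1},\epsilon)$ and $\tilde B(\overline{a},\epsilon)=\{\overline{a}\}\cup B(\overline{a(\epsilon)},\epsilon)$. For $A\subseteq L_n$, the topology $\tau(A)$ on $X_n$ is generated by the local bases: at $\overline{a}\in P_n$, the sets $B(\overline{a},\epsilon)$ with $0<\epsilon<a_n$; at $\overline{a}\in A$, the sets $B(\overline{a},\epsilon)\cap X_n$ with $\epsilon>0$; at $\overline{a}\in L_n\setminus A$, the sets $\tilde B(\overline{a},\epsilon)$ with $\epsilon>0$. (Equivalently, $\tau(A)|_{L_n}$ is the topology on $L_n$ whose open sets are the sets $U\cup D$ with $U$ Euclidean-open in $L_n$ and $D\subseteq L_n\setminus A$.) A space is perfect if every closed set is a $G_\delta$-set. *)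

(* Defs.v *)
From mathcomp Require Import all_boot all_order all_algebra.
From mathcomp Require Import boolp classical_sets reals.
Set Implicit Arguments. Unset Strict Implicit. Unset Printing Implicit Defensive.
Import Order.TTheory GRing.Theory Num.Theory.
Local Open Scope ring_scope.
Local Open Scope classical_set_scope.

(* Points of R^(n+1) are functions 'I_n.+1 -> R; the last coordinate
   x_{n+1} is  x ord_max. *)
Section Defs.
Variables (R : realType) (n : nat).
Notation pt := ('I_n.+1 -> R).

Definition edist (x a : pt) : R := Num.sqrt (\sum_(i < n.+1) (x i - a i) ^+ 2).

Definition eball (a : pt) (eps : R) : set pt := [set x | edist x a < eps].

Definition Pn : set pt := [set x | 0 < x ord_max].
Definition Ln : set pt := [set x | x ord_max = 0].
Definition Xn : set pt := Pn `|` Ln.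

Definition shift_up (a : pt) (eps : R) : pt :=
  fun i => if i == ord_max then eps else a i.

Definition tball (a : pt) (eps : R) : set pt :=
  [set a] `|` eball (shift_up a eps) eps.

Definition tau_base (A : set pt) (a : pt) (N : set pt) : Prop :=
  (Pn a /\ exists eps, 0 < eps /\ eps < a ord_max /\ N = eball a eps)
  \/ (A a /\ exists eps, 0 < eps /\ N = eball a eps `&` Xn)
  \/ ((Ln `\` A) a /\ exists eps, 0 < eps /\ N = tball a eps).

Definition tau_open (A : set pt) (O : set pt) : Prop :=
  O `<=` Xn /\ forall a, O a -> exists N, tau_base A a N /\ N `<=` O.

Definition tauL_open (A : set pt) (V : set pt) : Prop :=
  exists O, tau_open A O /\ V = O `&` Ln.

Definition tauL_closed (A : set pt) (C : set pt) : Prop :=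
  C `<=` Ln /\ tauL_open A (Ln `\` C).

Definition tauL_Gdelta (A : set pt) (C : set pt) : Prop :=
  exists V : nat -> set pt, (forall k, tauL_open A (V k)) /\ C = \bigcap_k V k.

Definition tauL_perfect (A : set pt) : Prop :=
  forall C, tauL_closed A C -> tauL_Gdelta A C.

Definition eopen (O : set pt) : Prop :=
  forall x, O x -> exists eps, 0 < eps /\ eball x eps `<=` O.

Definition eL_open (V : set pt) : Prop := exists O, eopen O /\ V = O `&` Ln.

Definition eL_Gdelta (C : set pt) : Prop :=
  exists V : nat -> set pt, (forall k, eL_open (V k)) /\ C = \bigcap_k V k.

End Defs.

(* Main.v *)
Require Import Defs.
From mathcomp Require Import all_boot all_order all_algebra.
From mathcomp Require Import boolp classical_sets reals.
From mathcomp Require Import ring lra.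
Import Order.TTheory GRing.Theory Num.Theory.
Local Open Scope ring_scope.
Local Open Scope classical_set_scope.

Section Metric.
Variable R : realType.

Lemma sq0 k (u : 'I_k -> R) : \sum_(i < k) u i ^+ 2 = 0 -> forall i, u i = 0.
Proof.
move=> /eqP; rewrite psumr_eq0; last by move=> i _; rewrite sqr_ge0.
move=> /allP H i; have := H i (mem_index_enum _); rewrite /= sqrf_eq0.
by move/eqP.
Qed.

Lemma cs k (u v : 'I_k -> R) :
  \sum_(i < k) u i * v i <=
  Num.sqrt (\sum_(i < k) u i ^+ 2) * Num.sqrt (\sum_(i < k) v i ^+ 2).
Proof.
set Su := \sum_(i < k) u i ^+ 2; set Sv := \sum_(i < k) v i ^+ 2.
have Su0 : 0 <= Su by rewrite sumr_ge0 // => i _; rewrite sqr_ge0.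
have Sv0 : 0 <= Sv by rewrite sumr_ge0 // => i _; rewrite sqr_ge0.
set a := Num.sqrt Su; set b := Num.sqrt Sv.
have a0 : 0 <= a by rewrite sqrtr_ge0.
have b0 : 0 <= b by rewrite sqrtr_ge0.
have ha : a ^+ 2 = Su by rewrite sqr_sqrtr.
have hb : b ^+ 2 = Sv by rewrite sqr_sqrtr.
have [az|anz] := eqVneq a 0.
  have : Su = 0 by rewrite -ha az expr0n.
  move/sq0 => hu; rewrite big1 ?az ?mul0r // => i _; by rewrite hu mul0r.
have [bz|bnz] := eqVneq b 0.
  have : Sv = 0 by rewrite -hb bz expr0n.
  move/sq0 => hv; rewrite big1 ?bz ?mulr0 // => i _; by rewrite hv mulr0.
have ap : 0 < a by rewrite lt_def anz.
have bp : 0 < b by rewrite lt_def bnz.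
have key : 2 * (a * b) * \sum_(i < k) u i * v i <= 2 * (a ^+ 2 * b ^+ 2).
  have -> : 2 * (a ^+ 2 * b ^+ 2) = \sum_(i < k) (b ^+ 2 * u i ^+ 2 + a ^+ 2 * v i ^+ 2).
    rewrite big_split /= -!mulr_sumr -/Su -/Sv -ha -hb; ring.
  rewrite mulr_sumr; apply: ler_sum => i _.
  have := sqr_ge0 (b * u i - a * v i); nra.
set X := \sum_(i < k) u i * v i in key *.
have abp : 0 < a * b by rewrite mulr_gt0.
nra.
Qed.

Variable n : nat.
Notation pt := ('I_n.+1 -> R).

Lemma edist_tri (x y z : pt) : edist x z <= edist x y + edist y z.
Proof.
rewrite /edist.
set u := fun i => x i - y i; set v := fun i => y i - z i.
have -> : \sum_(i < n.+1) (x i - z i) ^+ 2 = \sum_(i < n.+1) (u i + v i) ^+ 2.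
  by apply: eq_bigr => i _; rewrite /u /v; congr (_ ^+ 2); ring.
have hc := cs _ u v.
set a := Num.sqrt (\sum_(i < n.+1) (x i - y i) ^+ 2) in hc *.
set b := Num.sqrt (\sum_(i < n.+1) (y i - z i) ^+ 2) in hc *.
have a0 : 0 <= a by rewrite sqrtr_ge0.
have b0 : 0 <= b by rewrite sqrtr_ge0.
have ha : a ^+ 2 = \sum_(i < n.+1) u i ^+ 2.
  by rewrite sqr_sqrtr // sumr_ge0 // => i _; rewrite sqr_ge0.
have hb : b ^+ 2 = \sum_(i < n.+1) v i ^+ 2.
  by rewrite sqr_sqrtr // sumr_ge0 // => i _; rewrite sqr_ge0.
rewrite -(ger0_norm (addr_ge0 a0 b0)) -sqrtr_sqr ler_sqrt; last by rewrite sqr_ge0.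
have -> : \sum_(i < n.+1) (u i + v i) ^+ 2 =
   \sum_(i < n.+1) u i ^+ 2 + 2 * \sum_(i < n.+1) u i * v i + \sum_(i < n.+1) v i ^+ 2.
  rewrite mulr_sumr -!big_split /=; apply: eq_bigr => i _; ring.
rewrite -ha -hb; set X := \sum_(i < n.+1) u i * v i in hc *.
nra.
Qed.

Lemma edist_xx (x : pt) : edist x x = 0.
Proof. by rewrite /edist big1 ?sqrtr0 // => i _; rewrite subrr expr0n. Qed.

Lemma edist_sym (x y : pt) : edist x y = edist y x.
Proof. by rewrite /edist; congr Num.sqrt; apply: eq_bigr => i _; rewrite -sqrrN opprB. Qed.

Lemma edist_coord (x y : pt) i : `|x i - y i| <= edist x y.
Proof.
rewrite /edist -sqrtr_sqr ler_sqrt; last by rewrite sumr_ge0 // => j _; rewrite sqr_ge0.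
by rewrite (bigD1 i) //= lerDl sumr_ge0 // => j _; rewrite sqr_ge0.

Qed.

End Metric.

Arguments edist_coord {R n} x y i.
Arguments edist_tri {R n} x y z.
Arguments edist_xx {R n} x.
Arguments edist_sym {R n} x y.
Section Char.
Variables (R : realType) (n : nat).
Notation pt := ('I_n.+1 -> R).
Notation LN := (@Ln R n).
Notation PN := (@Pn R n).

Definition good (A V : set pt) : Prop :=
  V `<=` LN /\ forall a, V a -> A a ->
    exists eps : R, 0 < eps /\ forall x, LN x -> edist x a < eps -> V x.

Lemma LnPn {x : pt} : LN x -> PN x -> False.
Proof. by rewrite /Ln /Pn /= => ->; rewrite ltxx. Qed.

Lemma eball_Pn {a : pt} {eps} : 0 < a ord_max -> eps <= a ord_max -> eball a eps `<=` PN.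
Proof.
move=> ha he x; rewrite /eball /Pn /= => hx.
have := le_lt_trans (edist_coord x a ord_max) hx.
rewrite ltr_norml => /andP[h1 _]; lra.
Qed.

Lemma tball_Pn {a : pt} {eps} : 0 < eps -> eball (shift_up a eps) eps `<=` PN.
Proof.
move=> he x; rewrite /eball /Pn /= => hx.
have := le_lt_trans (edist_coord x (shift_up a eps) ord_max) hx.
rewrite /shift_up eqxx ltr_norml => /andP[h1 _]; lra.
Qed.

Lemma tauL_good (A V : set pt) : tauL_open A V <-> good A V.
Proof.
split.
- move=> [O [[OX Ob] ->]]; split; first by move=> x [].
  move=> a [Oa La] Aa.
  have [N [hN NO]] := Ob a Oa.
  case: hN => [[Pa _]|[[_ [eps [e0 hNe]]]|[[_ nAa] _]]].
  + by exfalso; exact: (LnPn La Pa).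
  + rewrite hNe in NO; exists eps; split => // x Lx hx; split => //; apply: NO; split => //.
    by right.
  + by exfalso; exact: nAa.
- move=> [VL Vg]; exists (V `|` PN); split; last first.
    rewrite eqEsubset; split => x.
      by move=> Vx; split; [left|exact: VL].
    by move=> [[]// Px Lx]; exfalso; exact: (LnPn Lx Px).
  split.
    move=> x [Vx|Px]; [right; exact: VL|by left].
  move=> a [Va|Pa].
  + have La := VL a Va.
    have [Aa|nAa] := pselect (A a).
    * have [eps [e0 he]] := Vg a Va Aa.
      exists (eball a eps `&` @Xn R n); split.
        by right; left; split => //; exists eps.
      move=> x [hx [Px|Lx]]; [by right|left; exact: he].
    * exists (tball a 1); split.
        by right; right; split; [split|exists 1; split].
      move=> x [->|hx]; first by left.
      by have := @tball_Pn a 1 ltr01 x hx; right.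
  + have h2 : 0 < a ord_max / 2 by rewrite divr_gt0.
    exists (eball a (a ord_max / 2)); split.
      left; split => //; exists (a ord_max / 2); split => //; split => //.
      rewrite /Pn /= in Pa; lra.
    move=> x hx; have : a ord_max / 2 <= a ord_max by rewrite /Pn /= in Pa; lra.
    by move/(eball_Pn Pa)/(_ x hx); right.
Qed.
End Char.

Arguments tauL_good {R n} A V.
Section Main.
Variables (R : realType) (n : nat).
Notation pt := ('I_n.+1 -> R).
Notation LN := (@Ln R n).

Lemma archi_eps {eps : R} : 0 < eps -> exists k : nat, k.+1%:R^-1 < eps.
Proof.
move=> e0; have ei : 0 < eps^-1 by rewrite invr_gt0.
have hb := archi_boundP (ltW ei).
set k := Num.Def.archi_bound eps^-1 in hb; exists k.
have hK : k%:R < k.+1%:R :> R by rewrite ltr_nat.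
have Kp : 0 < k.+1%:R :> R by rewrite ltr0n.
rewrite -[X in _ < X](invrK eps) ltf_pV2 ?posrE //.
exact: lt_trans hb hK.
Qed.

Theorem main_gen (A : set pt) : A `<=` LN -> (tauL_perfect A <-> eL_Gdelta A).
Proof.
move=> AL; split.
- move=> hp.
  have hC : tauL_closed A A.
    split => //; apply/tauL_good; split; [by move=> x []|by move=> a [_ nA] Aa].
  have [V [Vo AV]] := hp A hC.
  exists (fun k => [set x | exists eps, 0 < eps /\
            forall y, LN y -> edist y x < eps -> V k y] `&` LN).
  split.
  + move=> k; eexists; split; last reflexivity.
    move=> x [eps [e0 he]]; exists eps; split => // z hz.
    rewrite /eball /= in hz.
    exists (eps - edist z x); split; first by rewrite subr_gt0.
    move=> y Ly hy; apply: he => //; have := edist_tri y z x; lra.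
  + rewrite eqEsubset; split.
    * move=> a Aa k _.
      have [VL Vg] := (tauL_good A (V k)).1 (Vo k).
      have Vka : V k a by move: Aa; rewrite AV => /(_ k I).
      have [eps [e0 he]] := Vg a Vka Aa.
      split; [exists eps; split => //|exact: AL].
    * move=> x hx; rewrite AV => k _.
      have [[eps [e0 he]] Lx] := hx k I.
      by apply: he => //; rewrite edist_xx.
- move=> [W [Wo AW]] C [CL Co].
  have [_ Cg] := (tauL_good A (LN `\` C)).1 Co.
  pose U k := [set x | exists c, C c /\ edist x c < k.+1%:R^-1].
  exists (fun k => C `|` (W k `&` U k)); split.
  + move=> k; apply/tauL_good; have [O [Oo hO]] := Wo k; split.
      move=> x [Cx|[Wx _]]; first exact: CL.
      by rewrite hO in Wx; case: Wx.
    move=> a Va Aa.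
    have Wa : W k a by move: Aa; rewrite AW => /(_ k I).
    have Ua : U k a.
      case: Va => [Ca|[_ //]]; exists a; split => //.
      by rewrite edist_xx invr_gt0 ltr0n.
    have [c [Cc hc]] := Ua.
    have Oa : O a by rewrite hO in Wa; case: Wa.
    have [e1 [e1p hb]] := Oo a Oa.
    exists (Num.min e1 (k.+1%:R^-1 - edist a c)); split.
      by rewrite lt_min e1p subr_gt0.
    move=> x Lx; rewrite lt_min => /andP[hx1 hx2].
    right; split.
      by rewrite hO; split => //; apply: hb.
    exists c; split => //; have := edist_tri x a c.
    set t := k.+1%:R^-1 in hx2 *; lra.
  + rewrite eqEsubset; split; first by move=> x Cx k _; left.
    move=> x hx; have [//|nCx] := pselect (C x).
    exfalso.
    have hk k : (W k `&` U k) x by case: (hx k I).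
    have Ax : A x by rewrite AW => k _; exact: (hk k).1.
    have Lx := AL x Ax.
    have [eps [e0 he]] := Cg x (conj Lx nCx) Ax.
    have [k hkeps] := archi_eps e0.
    have [c [Cc hc]] := (hk k).2.
    have : (LN `\` C) c.
      by apply: he; [exact: CL|rewrite edist_sym; exact: lt_trans hc hkeps].
    by case.
Qed.

End Main.

Theorem mainTheorem10 (R : realType) (m : nat) (A : set ('I_m.+2 -> R)) :
  A `<=` @Ln R m.+1 ->
  (tauL_perfect A <-> eL_Gdelta A).
Proof. exact: main_gen. Qed.
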